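(* Let $\mathcal D$ be an ordered, oriented Descartes configuration. Then the curvature-center coordinate matrix $M_{\mathcal D}$ is an integer matrix if and only if three of its four rows are integer vectors; equivalently, iff $\mathcal D$ contains three circles each having integer signed curvature $b$ and curvature$\times$center $b(x+iy)\in\mathbb Z[i]$.
   Context: Circles are taken in $\hat{\mathbb C}=\mathbb R^2\cup\{\infty\}$; lines count as circles. A Descartes configuration is a set of four mutually tangent circles with disjoint interiors; an ordered, oriented one carries an ordering and a total orientation, with signed curvatures $b_i$ (reciprocal radius, negative if the circle's interior is unbounded, $0$ for lines, all reversed for negative orientation). The curvature-center coordinate matrix $M_{\mathcal D}$ is the $4\times3$ matrix with $i$-th row $(b_i,b_ix_i,b_iy_i)$, $(x_i,y_i)$ the center of the $i$-th circle; for a line the row is $(0,n_x,n_y)$, $n$ the unit normal pointing into its interior half-plane (for a line, ''curvature$\times$center'' means $n_x+in_y$). *)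

(* Defs.v *)
From HB Require Import structures.
From mathcomp Require Import all_boot all_order all_algebra.
From mathcomp Require Import reals.
Set Implicit Arguments. Unset Strict Implicit. Unset Printing Implicit Defensive.
Import Order.TTheory GRing.Theory Num.Theory.
Local Open Scope ring_scope.

Section Circles.
Variable R : realType.

(* Points of the extended plane \hat C = R^2 \cup {oo}: None is oo. *)
Definition point := (R * R)%type.
Definition ext_point := option point.

Definition sqdist (p q : point) : R := (p.1 - q.1) ^+ 2 + (p.2 - q.2) ^+ 2.
Definition dot (n p : point) : R := n.1 * p.1 + n.2 * p.2.

(* An oriented circle:
   - OCirc c r true  : circle of center c, radius r, interior = open disk;
   - OCirc c r false : same circle, interior = complement of closed disk (contains oo);
   - OLine n d       : line {p | n.p = d} (plus oo), n a unit normal pointing into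
                       the interior half-plane {p | n.p > d}. *)
Inductive ocircle :=
| OCirc of point & R & bool
| OLine of point & R.

Definition wf_ocircle (C : ocircle) : Prop :=
  match C with
  | OCirc _ r _ => 0 < r
  | OLine n _ => dot n n = 1
  end.

Definition on_circle (C : ocircle) (z : ext_point) : Prop :=
  match C, z with
  | OCirc c r _, Some p => sqdist p c = r ^+ 2
  | OCirc _ _ _, None => False
  | OLine n d, Some p => dot n p = d
  | OLine _ _, None => True
  end.

Definition interior (C : ocircle) (z : ext_point) : Prop :=
  match C, z with
  | OCirc c r true, Some p => sqdist p c < r ^+ 2
  | OCirc _ _ true, None => False
  | OCirc c r false, Some p => r ^+ 2 < sqdist p c
  | OCirc _ _ false, None => True
  | OLine n d, Some p => d < dot n p
  | OLine _ _, None => False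
  end.

Definition reverse (C : ocircle) : ocircle :=
  match C with
  | OCirc c r b => OCirc c r (~~ b)
  | OLine n d => OLine (- n.1, - n.2) (- d)
  end.

Definition tangent (C1 C2 : ocircle) : Prop :=
  exists! z : ext_point, on_circle C1 z /\ on_circle C2 z.

Definition disjoint_interiors (C1 C2 : ocircle) : Prop :=
  forall z, ~ (interior C1 z /\ interior C2 z).

(* An ordered, oriented Descartes configuration: four mutually tangent circles,
   with total orientation either positive (interiors pairwise disjoint) or
   negative (all orientations reversed from a positive one). *)
Definition descartes_config (D : 'I_4 -> ocircle) : Prop :=
  (forall i, wf_ocircle (D i)) /\
  (forall i j : 'I_4, i != j -> tangent (D i) (D j)) /\
  ((forall i j : 'I_4, i != j -> disjoint_interiors (D i) (D j)) \/
   (forall i j : 'I_4, i != j ->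
      disjoint_interiors (reverse (D i)) (reverse (D j)))).

Definition curvature (C : ocircle) : R :=
  match C with
  | OCirc _ r true => r^-1
  | OCirc _ r false => - r^-1
  | OLine _ _ => 0
  end.

(* "curvature x center" (b x, b y); for a line, the unit normal into its interior *)
Definition curv_center (C : ocircle) : point :=
  match C with
  | OCirc c _ _ => (curvature C * c.1, curvature C * c.2)
  | OLine n _ => n
  end.

Definition cc_matrix (D : 'I_4 -> ocircle) : 'M[R]_(4, 3) :=
  \matrix_(i < 4, j < 3)
    nth 0 [:: curvature (D i); (curv_center (D i)).1; (curv_center (D i)).2] j.

End Circles.

(* Main.v *)
Require Import Defs.
From HB Require Import structures.
From mathcomp Require Import all_boot all_order all_algebra.
From mathcomp Require Import reals.
From mathcomp Require Import ring lra zify.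
Import Order.TTheory GRing.Theory Num.Theory.
Local Open Scope ring_scope.
Set Implicit Arguments. Unset Strict Implicit. Unset Printing Implicit Defensive.


Record v4 (R : realType) := V4 { vbb : R; vb : R; vu : R; vv : R }.

Definition lf (R : realType) (a a' : v4 R) : R :=
  vu a * vu a' + vv a * vv a' - (vb a * vbb a' + vbb a * vb a') / 2.

Definition Pt (R : realType) (z : option (R * R)) : v4 R :=
  match z with
  | Some p => V4 (p.1 ^+ 2 + p.2 ^+ 2) 1 p.1 p.2
  | None => V4 1 0 0 0
  end.

Lemma plane (R : realType) (w1 w2 w1' w2' c c' : R) :
  w1 ^+ 2 + w2 ^+ 2 = 1 -> w1' ^+ 2 + w2' ^+ 2 = 1 ->
  [\/ w1 * w1' + w2 * w2' = -1,
      exists q1 q2, [/\ w1 * q1 + w2 * q2 = c, w1' * q1 + w2' * q2 = c' &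
                      (q1 ^+ 2 + q2 ^+ 2 != 0) \/ (c = 0 /\ c' = 0)] |
      exists q1 q2, [/\ q1 ^+ 2 + q2 ^+ 2 != 0, c < w1 * q1 + w2 * q2 &
                      c' < w1' * q1 + w2' * q2]].
Proof.
move=> hw hw'.
set d := w1 * w2' - w2 * w1'.
have hrd : (w1 * w1' + w2 * w2') ^+ 2 + d ^+ 2 = 1.
  by rewrite -[1]mulr1 -{1}hw -hw' /d; ring.
have [d0|dn0] := eqVneq d 0.
- have hr2 : (w1 * w1' + w2 * w2') ^+ 2 = 1 by rewrite -hrd d0; ring.
  have : (w1 * w1' + w2 * w2' - 1) * (w1 * w1' + w2 * w2' + 1) = 0.
    by transitivity ((w1 * w1' + w2 * w2') ^+ 2 - 1); [ring|rewrite hr2; ring].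
  move/eqP; rewrite mulf_eq0 => /orP [] /eqP h.
  + have hr : w1 * w1' + w2 * w2' = 1 by lra.
    apply: Or33. set t := `|c| + `|c'| + 1.
    have ht : 0 < t by rewrite /t; have := normr_ge0 c; have := normr_ge0 c'; lra.
    exists (t * w1), (t * w2); split.
    * have -> : (t * w1) ^+ 2 + (t * w2) ^+ 2 = t ^+ 2 by rewrite -[t^+2]mulr1 -hw; ring.
      by rewrite expf_neq0 // gt_eqF.
    * have -> : w1 * (t * w1) + w2 * (t * w2) = t by rewrite -[t]mulr1 -{3}hw; ring.
      rewrite /t; have := ler_norm c; have := normr_ge0 c'; lra.
    * have -> : w1' * (t * w1) + w2' * (t * w2) = t by rewrite -[t]mulr1 -{3}hr; ring.
      rewrite /t; have := ler_norm c'; have := normr_ge0 c; lra.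
  + by apply: Or31; lra.
- apply: Or32.
  exists ((c * w2' - w2 * c') / d), ((w1 * c' - c * w1') / d); split.
  + by rewrite /d; field; rewrite -/d.
  + by rewrite /d; field; rewrite -/d.
  + have [/andP [c0 c0']|hc] := boolP ((c == 0) && (c' == 0)).
    * by right; split; apply/eqP.
    left; apply/negP => /eqP hq.
    have hq1 : (c * w2' - w2 * c') / d = 0.
      by apply/eqP; rewrite -sqrf_eq0; apply/eqP; have := sqr_ge0 ((w1 * c' - c * w1') / d);
         have := sqr_ge0 ((c * w2' - w2 * c') / d); lra.
    have hq2 : (w1 * c' - c * w1') / d = 0.
      by apply/eqP; rewrite -sqrf_eq0; apply/eqP; have := sqr_ge0 ((w1 * c' - c * w1') / d);
         have := sqr_ge0 ((c * w2' - w2 * c') / d); lra.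
    have e1 : c = w1 * ((c * w2' - w2 * c') / d) + w2 * ((w1 * c' - c * w1') / d).
      by rewrite /d; field; rewrite -/d.
    have e2 : c' = w1' * ((c * w2' - w2 * c') / d) + w2' * ((w1 * c' - c * w1') / d).
      by rewrite /d; field; rewrite -/d.
    rewrite hq1 hq2 !mulr0 addr0 in e1 e2.
    by move: hc; rewrite e1 e2 eqxx.
Qed.


Lemma lf_on_fin (R : realType) (a : v4 R) x0 y0 :
  lf a (Pt (Some (x0, y0))) = 0 ->
  vbb a = 2 * (vu a * x0 + vv a * y0) - vb a * (x0 ^+ 2 + y0 ^+ 2).
Proof.
case: a => bb b u v; rewrite /lf /= => e.
transitivity (bb + 2 * (u * x0 + v * y0 - (b * (x0 ^+ 2 + y0 ^+ 2) + bb * 1) / 2)).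
  by rewrite e; ring.
by field.
Qed.

Lemma lf_norm_w (R : realType) (a : v4 R) x0 y0 :
  lf a (Pt (Some (x0, y0))) = 0 ->
  lf a a = (vu a - vb a * x0) ^+ 2 + (vv a - vb a * y0) ^+ 2.
Proof.
move=> /lf_on_fin; case: a => bb b u v /= ->; rewrite /lf /=; by field.
Qed.

Lemma lf_w (R : realType) (a a' : v4 R) x0 y0 :
  lf a (Pt (Some (x0, y0))) = 0 -> lf a' (Pt (Some (x0, y0))) = 0 ->
  lf a a' = (vu a - vb a * x0) * (vu a' - vb a' * x0)
            + (vv a - vb a * y0) * (vv a' - vb a' * y0).
Proof.
move=> /lf_on_fin + /lf_on_fin; case: a => bb b u v; case: a' => bb' b' u' v' /= -> ->.
rewrite /lf /=; by field.
Qed.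

Lemma lf_shift (R : realType) (a : v4 R) x0 y0 q1 q2 :
  lf a (Pt (Some (x0, y0))) = 0 -> q1 ^+ 2 + q2 ^+ 2 != 0 ->
  lf a (Pt (Some (x0 + q1 / (q1 ^+ 2 + q2 ^+ 2), y0 + q2 / (q1 ^+ 2 + q2 ^+ 2))))
  = ((vu a - vb a * x0) * q1 + (vv a - vb a * y0) * q2 - vb a / 2)
     / (q1 ^+ 2 + q2 ^+ 2).
Proof.
move=> /lf_on_fin; case: a => bb b u v /= -> nz.
by rewrite /lf /=; field.
Qed.

Lemma key (R : realType) (a a' : v4 R) :
  lf a a = 1 -> lf a' a' = 1 ->
  (exists! z, lf a (Pt z) = 0 /\ lf a' (Pt z) = 0) ->
  (forall z, ~ (0 < lf a (Pt z) /\ 0 < lf a' (Pt z))) -> lf a a' = -1.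
Proof.
move=> h1 h2 [[[x0 y0]|] [[e1 e2] uniq]] disj.
- have hw := lf_norm_w e1; have hw' := lf_norm_w e2; have hr := lf_w e1 e2.
  rewrite h1 in hw; rewrite h2 in hw'.
  have [hm|[q1 [q2 [s1 s2 hq]]]|[q1 [q2 [nz s1 s2]]]] :=
    plane (vb a / 2) (vb a' / 2) (esym hw) (esym hw').
  + by rewrite hr.
  + case: hq => [nz|[c0 c0']].
    * have hs := lf_shift e1 nz; have hs' := lf_shift e2 nz.
      have hs0 : lf a (Pt (Some (x0 + q1 / (q1 ^+ 2 + q2 ^+ 2), y0 + q2 / (q1 ^+ 2 + q2 ^+ 2)))) = 0
        by rewrite hs s1 subrr mul0r.
      have hs0' : lf a' (Pt (Some (x0 + q1 / (q1 ^+ 2 + q2 ^+ 2), y0 + q2 / (q1 ^+ 2 + q2 ^+ 2)))) = 0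
        by rewrite hs' s2 subrr mul0r.
      case: (uniq _ (conj hs0 hs0')) => hx hy.
      have : q1 / (q1 ^+ 2 + q2 ^+ 2) = 0 by lra.
      have : q2 / (q1 ^+ 2 + q2 ^+ 2) = 0 by lra.
      move/eqP; rewrite mulf_eq0 invr_eq0 (negbTE nz) orbF => /eqP q20.
      move/eqP; rewrite mulf_eq0 invr_eq0 (negbTE nz) orbF => /eqP q10.
      by move: nz; rewrite q10 q20 expr0n /= addr0 eqxx.
    * have hN : forall c : v4 R, vb c = 0 -> lf c (Pt None) = 0.
        by case=> bb b u v /= ->; rewrite /lf /=; ring.
      have /uniq // : lf a (Pt None) = 0 /\ lf a' (Pt None) = 0.
      by split; apply: hN; lra.
  + have n0 : 0 < q1 ^+ 2 + q2 ^+ 2.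
      by rewrite lt_def nz /= addr_ge0 // sqr_ge0.
    case: (disj (Some (x0 + q1 / (q1 ^+ 2 + q2 ^+ 2), y0 + q2 / (q1 ^+ 2 + q2 ^+ 2)))).
    rewrite (lf_shift e1 nz) (lf_shift e2 nz).
    by split; apply: divr_gt0 => //; lra.
- have hb : forall c : v4 R, lf c (Pt None) = 0 -> vb c = 0.
    by case=> bb b u v; rewrite /lf /= => h; lra.
  have hS : forall c : v4 R, vb c = 0 -> forall q1 q2,
      lf c (Pt (Some (q1, q2))) = vu c * q1 + vv c * q2 - vbb c / 2.
    by case=> bb b u v /= -> q1 q2; rewrite /lf /=; ring.
  have hb1 := hb _ e1; have hb2 := hb _ e2.
  have hw : vu a ^+ 2 + vv a ^+ 2 = 1 by rewrite -h1 /lf hb1; ring.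
  have hw' : vu a' ^+ 2 + vv a' ^+ 2 = 1 by rewrite -h2 /lf hb2; ring.
  have hr : lf a a' = vu a * vu a' + vv a * vv a' by rewrite /lf hb1 hb2; ring.
  have [hm|[q1 [q2 [s1 s2 hq]]]|[q1 [q2 [nz s1 s2]]]] :=
    plane (vbb a / 2) (vbb a' / 2) hw hw'.
  + by rewrite hr.
  + have /uniq // : lf a (Pt (Some (q1, q2))) = 0 /\ lf a' (Pt (Some (q1, q2))) = 0.
    by rewrite !hS // s1 s2 !subrr.
  + case: (disj (Some (q1, q2))).
    by rewrite !hS //; lra.
Qed.


Definition bbar (R : realType) (C : ocircle R) : R :=
  match C with
  | OCirc c r true => (c.1 ^+ 2 + c.2 ^+ 2 - r ^+ 2) / r
  | OCirc c r false => - ((c.1 ^+ 2 + c.2 ^+ 2 - r ^+ 2) / r)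
  | OLine n d => 2 * d
  end.

Definition vec (R : realType) (C : ocircle R) : v4 R :=
  V4 (bbar C) (curvature C) (curv_center C).1 (curv_center C).2.

Lemma lf_vec_self (R : realType) (C : ocircle R) : wf_ocircle C -> lf (vec C) (vec C) = 1.
Proof.
case: C => [[c1 c2] r [] | [n1 n2] d] /=; rewrite /lf /= ?/dot /=.
- move=> hr; have hr0 : r != 0 by rewrite gt_eqF.
  by field.
- move=> hr; have hr0 : r != 0 by rewrite gt_eqF.
  by field.
- move=> h; rewrite -h; ring.
Qed.

Lemma lf_vec_pt (R : realType) (C : ocircle R) : wf_ocircle C ->
  (forall z, on_circle C z <-> lf (vec C) (Pt z) = 0) /\
  (forall z, interior C z <-> 0 < lf (vec C) (Pt z)).
Proof.
case: C => [[c1 c2] r [] | [n1 n2] d] /=.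
- move=> hr; have hr0 : r != 0 by rewrite gt_eqF.
  have key : forall p : R * R, lf (vec (OCirc (c1, c2) r true)) (Pt (Some p)) =
     - (sqdist p (c1, c2) - r ^+ 2) / (2 * r).
    by case=> x y; rewrite /lf /sqdist /=; field.
  have kN : lf (vec (OCirc (c1, c2) r true)) (Pt None) = - (1 / (2 * r)).
    by rewrite /lf /=; field.
  have hr2 : 0 < 2 * r by lra.
  split=> [[p|]|[p|]] /=; rewrite ?key ?kN.
  + split=> [->|]; first by rewrite subrr oppr0 mul0r.
    move/eqP; rewrite mulf_eq0 invr_eq0 oppr_eq0 subr_eq0 (gt_eqF hr2) orbF.
    by move/eqP.
  + split=> // h; exfalso; move: h; apply/eqP; rewrite oppr_eq0.
    by rewrite mul1r invr_eq0 gt_eqF.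
  + rewrite pmulr_lgt0 ?invr_gt0 // oppr_gt0 subr_lt0.
    by [].
  + split=> // h; exfalso; move: h; rewrite oppr_gt0 mul1r invr_lt0 ltNge.
    by rewrite ltW.
- move=> hr; have hr0 : r != 0 by rewrite gt_eqF.
  have key : forall p : R * R, lf (vec (OCirc (c1, c2) r false)) (Pt (Some p)) =
     (sqdist p (c1, c2) - r ^+ 2) / (2 * r).
    by case=> x y; rewrite /lf /sqdist /=; field.
  have kN : lf (vec (OCirc (c1, c2) r false)) (Pt None) = 1 / (2 * r).
    by rewrite /lf /=; field.
  have hr2 : 0 < 2 * r by lra.
  split=> [[p|]|[p|]] /=; rewrite ?key ?kN.
  + split=> [->|]; first by rewrite subrr mul0r.
    move/eqP; rewrite mulf_eq0 invr_eq0 subr_eq0 (gt_eqF hr2) orbF.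
    by move/eqP.
  + split=> // h; exfalso; move: h; apply/eqP.
    by rewrite mul1r invr_eq0 gt_eqF.
  + by rewrite pmulr_lgt0 ?invr_gt0 // subr_gt0.
  + by split=> // _; rewrite mul1r invr_gt0.
- move=> _.
  have key : forall p : R * R, lf (vec (OLine (n1, n2) d)) (Pt (Some p)) =
     dot (n1, n2) p - d.
    by case=> x y; rewrite /lf /dot /=; field.
  have kN : lf (vec (OLine (n1, n2) d)) (Pt None) = 0.
    by rewrite /lf /=; ring.
  split=> [[p|]|[p|]] /=; rewrite ?key ?kN.
  + by split=> [->|/eqP]; [rewrite subrr | rewrite subr_eq0 => /eqP].
  + by [].
  + by rewrite subr_gt0.
  + by rewrite ltxx.
Qed.

Lemma lf_sym (R : realType) (a b : v4 R) : lf a b = lf b a.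
Proof. rewrite /lf; ring. Qed.

Lemma lf_rev (R : realType) (C : ocircle R) x : lf (vec (reverse C)) x = - lf (vec C) x.
Proof.
case: C => [[c1 c2] r [] | [n1 n2] d]; case: x => bb b u v; rewrite /lf /=; ring.
Qed.

Lemma lf_rev2 (R : realType) (C : ocircle R) x : lf x (vec (reverse C)) = - lf x (vec C).
Proof. by rewrite lf_sym lf_rev lf_sym. Qed.

Lemma wf_rev (R : realType) (C : ocircle R) : wf_ocircle C -> wf_ocircle (reverse C).
Proof. case: C => [[c1 c2] r [] | [n1 n2] d] //=; rewrite /dot /= => <-; ring. Qed.

Lemma tang_conv (R : realType) (C C' : ocircle R) (a a' : v4 R) :
  (forall z, on_circle C z <-> lf a (Pt z) = 0) ->
  (forall z, on_circle C' z <-> lf a' (Pt z) = 0) ->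
  tangent C C' -> exists! z, lf a (Pt z) = 0 /\ lf a' (Pt z) = 0.
Proof.
move=> h h' [z [[o o'] u]]; exists z; split.
  by split; [apply/h|apply/h'].
by move=> z' [e e']; apply: u; split; [apply/h|apply/h'].
Qed.

Lemma gram (R : realType) (D : 'I_4 -> ocircle R) : descartes_config D ->
  forall i j, i != j -> lf (vec (D i)) (vec (D j)) = -1.
Proof.
move=> [wf [tg [disj|disj]]] i j ij.
- have [oi ii] := lf_vec_pt (wf i); have [oj ij'] := lf_vec_pt (wf j).
  apply: key.
  + exact: lf_vec_self.
  + exact: lf_vec_self.
  + exact: tang_conv oi oj (tg _ _ ij).
  + by move=> z [/ii hi /ij' hj]; apply: (disj _ _ ij z).
- have [oi ii] := lf_vec_pt (wf_rev (wf i)); have [oj ij'] := lf_vec_pt (wf_rev (wf j)).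
  have -> : lf (vec (D i)) (vec (D j)) = lf (vec (reverse (D i))) (vec (reverse (D j))).
    by rewrite (lf_rev (D i)) lf_rev2 opprK.
  apply: key.
  + exact: lf_vec_self (wf_rev (wf i)).
  + exact: lf_vec_self (wf_rev (wf j)).
  + have hc : forall C : ocircle R, wf_ocircle C -> forall z,
        on_circle C z <-> lf (vec (reverse C)) (Pt z) = 0.
      move=> C wC z; rewrite lf_rev; have [o _] := lf_vec_pt wC.
      by rewrite o; split=> [->|/eqP]; rewrite ?oppr0 // oppr_eq0 => /eqP.
    exact: tang_conv (hc _ (wf i)) (hc _ (wf j)) (tg _ _ ij).
  + by move=> z [/ii hi /ij' hj]; apply: (disj _ _ ij z).
Qed.


Definition compv (R : realType) (a : v4 R) (j : nat) : R :=
  nth 0 [:: vbb a; vb a; vu a; vv a] j.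

Definition Lmat (R : realType) : 'M[R]_4 :=
  \matrix_(i < 4, j < 4)
    nth 0 (nth [::] [:: [:: 0; -(1/2); 0; 0]; [:: -(1/2); 0; 0; 0];
                        [:: 0; 0; 1; 0]; [:: 0; 0; 0; 1]] i) j.
Definition Linv (R : realType) : 'M[R]_4 :=
  \matrix_(i < 4, j < 4)
    nth 0 (nth [::] [:: [:: 0; -2; 0; 0]; [:: -2; 0; 0; 0];
                        [:: 0; 0; 1; 0]; [:: 0; 0; 0; 1]] i) j.
Definition Ginv (R : realType) : 'M[R]_4 :=
  \matrix_(i < 4, j < 4) ((i == j)%:R / 2 - 1 / 4).

Definition Amat (R : realType) (x y z t : v4 R) : 'M[R]_4 :=
  \matrix_(i < 4, j < 4) compv (nth x [:: x; y; z; t] i) j.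

Lemma ALA (R : realType) (x y z t : v4 R) (i j : 'I_4) :
  (Amat x y z t *m Lmat R *m (Amat x y z t)^T) i j =
  lf (nth x [:: x; y; z; t] i) (nth x [:: x; y; z; t] j).
Proof.
rewrite mxE !big_ord_recr !big_ord0 /= !mxE !big_ord_recr !big_ord0 /= !mxE /=.
rewrite /lf /compv /=; by field.
Qed.

Lemma colrel (R : realType) (x y z t : v4 R) :
  (forall i j : 'I_4, lf (nth x [:: x; y; z; t] i) (nth x [:: x; y; z; t] j)
                      = if i == j then 1 else -1) ->
  forall c c' : 'I_4,
  (compv x c * compv x c' + compv y c * compv y c' + compv z c * compv z c'
   + compv t c * compv t c') / 2
  - (compv x c + compv y c + compv z c + compv t c)
    * (compv x c' + compv y c' + compv z c' + compv t c') / 4 = Linv R c c'.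
Proof.
move=> H c c'.
set A := Amat x y z t.
have HG : A *m Lmat R *m A^T = \matrix_(i < 4, j < 4) (if i == j then 1 else -1 : R).
  by apply/matrixP=> i j; rewrite ALA H mxE.
have HGi : (\matrix_(i < 4, j < 4) (if i == j then 1 else -1 : R)) *m Ginv R = 1%:M.
  apply/matrixP => i j; rewrite !mxE !big_ord_recr !big_ord0 /= !mxE.
  by case: i => [[|[|[|[|?]]]] //= Hi]; case: j => [[|[|[|[|?]]]] //= Hj]; field.
have HLi : Linv R *m Lmat R = 1%:M.
  apply/matrixP => i j; rewrite !mxE !big_ord_recr !big_ord0 /= !mxE.
  by case: i => [[|[|[|[|?]]]] //= Hi]; case: j => [[|[|[|[|?]]]] //= Hj]; field.
have H1 : A *m (Lmat R *m A^T *m Ginv R) = 1%:M by rewrite !mulmxA HG HGi.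
have H2 := mulmx1C H1.
have H3 : A^T *m Ginv R *m A = Linv R.
  by rewrite -[LHS]mul1mx -HLi -!mulmxA [X in _ *m X]mulmxA [X in _ *m X]mulmxA
    H2 mulmx1.
move/matrixP: H3 => /(_ c c').
rewrite !mxE !big_ord_recr !big_ord0 /= !mxE !big_ord_recr !big_ord0 /= !mxE /=.
move=> <-; rewrite /compv /=; by field.
Qed.

Lemma colrel_gamma (R : realType) (p1 p2 p3 p4 q1 q2 q3 q4 l : R) :
  (p1 * q1 + p2 * q2 + p3 * q3 + p4 * q4) / 2
  - (p1 + p2 + p3 + p4) * (q1 + q2 + q3 + q4) / 4 = l ->
  (p4 - (p1 + p2 + p3)) * (q4 - (q1 + q2 + q3))
  = 4 * l - 2 * (p1 * q1 + p2 * q2 + p3 * q3) + 2 * ((p1 + p2 + p3) * (q1 + q2 + q3)).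
Proof. by move=> <-; field. Qed.

Definition det3 (R : realType) (a b c d e f g h i : R) : R :=
  a * (e * i - f * h) - b * (d * i - f * g) + c * (d * h - e * g).

Lemma det_lemma (R : realType) (b1 b2 b3 u1 u2 u3 v1 v2 v3 be mu nu : R) :
  be * be = 4 * 0 - 2 * (b1 * b1 + b2 * b2 + b3 * b3) + 2 * ((b1 + b2 + b3) * (b1 + b2 + b3)) ->
  be * mu = 4 * 0 - 2 * (b1 * u1 + b2 * u2 + b3 * u3) + 2 * ((b1 + b2 + b3) * (u1 + u2 + u3)) ->
  be * nu = 4 * 0 - 2 * (b1 * v1 + b2 * v2 + b3 * v3) + 2 * ((b1 + b2 + b3) * (v1 + v2 + v3)) ->
  mu * mu = 4 * 1 - 2 * (u1 * u1 + u2 * u2 + u3 * u3) + 2 * ((u1 + u2 + u3) * (u1 + u2 + u3)) ->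
  mu * nu = 4 * 0 - 2 * (u1 * v1 + u2 * v2 + u3 * v3) + 2 * ((u1 + u2 + u3) * (v1 + v2 + v3)) ->
  nu * nu = 4 * 1 - 2 * (v1 * v1 + v2 * v2 + v3 * v3) + 2 * ((v1 + v2 + v3) * (v1 + v2 + v3)) ->
  be ^+ 2 = (det3 b1 u1 v1 b2 u2 v2 b3 u3 v3) ^+ 2.
Proof.
move=> hbb hbu hbv huu huv hvv.
have E1 : det3
   ((b1 * b1 + b2 * b2 + b3 * b3) / 2 - (b1 + b2 + b3) * (b1 + b2 + b3) / 2)
   ((b1 * u1 + b2 * u2 + b3 * u3) / 2 - (b1 + b2 + b3) * (u1 + u2 + u3) / 2)
   ((b1 * v1 + b2 * v2 + b3 * v3) / 2 - (b1 + b2 + b3) * (v1 + v2 + v3) / 2)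
   ((b1 * u1 + b2 * u2 + b3 * u3) / 2 - (b1 + b2 + b3) * (u1 + u2 + u3) / 2)
   ((u1 * u1 + u2 * u2 + u3 * u3) / 2 - (u1 + u2 + u3) * (u1 + u2 + u3) / 2)
   ((u1 * v1 + u2 * v2 + u3 * v3) / 2 - (u1 + u2 + u3) * (v1 + v2 + v3) / 2)
   ((b1 * v1 + b2 * v2 + b3 * v3) / 2 - (b1 + b2 + b3) * (v1 + v2 + v3) / 2)
   ((u1 * v1 + u2 * v2 + u3 * v3) / 2 - (u1 + u2 + u3) * (v1 + v2 + v3) / 2)
   ((v1 * v1 + v2 * v2 + v3 * v3) / 2 - (v1 + v2 + v3) * (v1 + v2 + v3) / 2)
  = - (1 / 4) * (det3 b1 u1 v1 b2 u2 v2 b3 u3 v3) ^+ 2.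
  by rewrite /det3; field.
have ebb : (b1 * b1 + b2 * b2 + b3 * b3) / 2 - (b1 + b2 + b3) * (b1 + b2 + b3) / 2
   = 0 - be * be / 4 by rewrite hbb; field.
have ebu : (b1 * u1 + b2 * u2 + b3 * u3) / 2 - (b1 + b2 + b3) * (u1 + u2 + u3) / 2
   = 0 - be * mu / 4 by rewrite hbu; field.
have ebv : (b1 * v1 + b2 * v2 + b3 * v3) / 2 - (b1 + b2 + b3) * (v1 + v2 + v3) / 2
   = 0 - be * nu / 4 by rewrite hbv; field.
have euu : (u1 * u1 + u2 * u2 + u3 * u3) / 2 - (u1 + u2 + u3) * (u1 + u2 + u3) / 2
   = 1 - mu * mu / 4 by rewrite huu; field.
have euv : (u1 * v1 + u2 * v2 + u3 * v3) / 2 - (u1 + u2 + u3) * (v1 + v2 + v3) / 2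
   = 0 - mu * nu / 4 by rewrite huv; field.
have evv : (v1 * v1 + v2 * v2 + v3 * v3) / 2 - (v1 + v2 + v3) * (v1 + v2 + v3) / 2
   = 1 - nu * nu / 4 by rewrite hvv; field.
rewrite ebb ebu ebv euu euv evv in E1.
have E2 : det3 (0 - be * be / 4) (0 - be * mu / 4) (0 - be * nu / 4)
   (0 - be * mu / 4) (1 - mu * mu / 4) (0 - mu * nu / 4)
   (0 - be * nu / 4) (0 - mu * nu / 4) (1 - nu * nu / 4) = - (1 / 4) * be ^+ 2.
  by rewrite /det3; field.
rewrite E2 in E1.
have : - (1 / 4) * (be ^+ 2 - (det3 b1 u1 v1 b2 u2 v2 b3 u3 v3) ^+ 2) = 0.
  by rewrite mulrBr E1 subrr.
move/eqP; rewrite mulf_eq0 => /orP [/eqP h|/eqP h]; first by exfalso; move: h; lra.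
by apply/eqP; rewrite -subr_eq0; apply/eqP.
Qed.


Lemma int_of (R : realType) (be mu : R) :
  be \is a Num.int -> be != 0 -> be * mu \is a Num.int -> mu * mu \is a Num.int ->
  mu \is a Num.int.
Proof.
move=> /intrP [b ->] hb /intrP [k hk] /intrP [n hn].
have hb0 : b != 0 by apply: contraNneq hb => ->.
have hmu : mu = k%:~R / b%:~R by rewrite -hk mulrAC divff ?mul1r // intr_eq0.
have e : (k ^+ 2)%:~R = (n * b ^+ 2)%:~R :> R.
  rewrite rmorphXn rmorphM rmorphXn /= -hn hmu; field.
  by rewrite intr_eq0.
move/eqP: e; rewrite eqr_int => /eqP e.
have d2 : (b ^+ 2 %| k ^+ 2)%Z by apply/dvdzP; exists n.
have d1 : (b %| k)%Z by move: d2; rewrite /dvdz !unfold_in /= !abszX dvdn_pexp2r.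
case/dvdzP: d1 => q hq.
by rewrite hmu hq rmorphM /= mulfK ?intr_eq0 // intr_int.
Qed.

Lemma int01 (R : realType) (m : R) :
  m \is a Num.int -> 0 <= m -> m <= 1 -> m = 0 \/ m = 1.
Proof.
move=> /intrP [n ->]; rewrite -[0]/(0%:~R) -[1]/(1%:~R) !ler_int => h0 h1.
have : n = 0 \/ n = 1 by lia.
by case=> ->; [left|right].
Qed.

Lemma sq_int_small (R : realType) (mu : R) :
  mu * mu / 4 \is a Num.int -> 0 <= mu * mu / 4 -> mu * mu / 4 <= 1 -> mu \is a Num.int.
Proof.
move=> hi h0 h1; case: (int01 hi h0 h1) => e.
- have : mu * mu = 0 by rewrite -[mu * mu](@divfK _ 4) ?e ?mul0r // pnatr_eq0.
  by move/eqP; rewrite mulf_eq0 orbb => /eqP ->; rewrite int_num0.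
- have : (mu - 2) * (mu + 2) = 0.
    have : mu * mu = 4 by rewrite -[mu * mu](@divfK _ 4) ?e ?mul1r // pnatr_eq0.
    by move=> h; transitivity (mu * mu - 4); [ring|rewrite h subrr].
  move/eqP; rewrite mulf_eq0 => /orP [] /eqP h.
  + have -> : mu = 2 by lra.
    exact: natr_int.
  + have -> : mu = - 2 by lra.
    by rewrite rpredN natr_int.
Qed.

Lemma iD (R:realType)(u v:R): u \is a Num.int -> v \is a Num.int -> u + v \is a Num.int. Proof. exact: rpredD. Qed.
Lemma iB (R:realType)(u v:R): u \is a Num.int -> v \is a Num.int -> u - v \is a Num.int. Proof. exact: rpredB. Qed.
Lemma iM (R:realType)(u v:R): u \is a Num.int -> v \is a Num.int -> u * v \is a Num.int. Proof. exact: rpredM. Qed.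
Lemma iN (R:realType)(u:R): u \is a Num.int -> - u \is a Num.int. Proof. by rewrite rpredN. Qed.
Lemma iK (R:realType)(n:nat): (n%:R : R) \is a Num.int. Proof. exact: natr_int. Qed.
Ltac intt := repeat first [assumption | apply: iK | apply: iD | apply: iB
  | apply: iM | apply: iN].

Lemma fourth (R : realType) (x y z t : v4 R) :
  (forall i j : 'I_4, lf (nth x [:: x; y; z; t] i) (nth x [:: x; y; z; t] j)
                      = if i == j then 1 else -1) ->
  vb x \is a Num.int -> vu x \is a Num.int -> vv x \is a Num.int ->
  vb y \is a Num.int -> vu y \is a Num.int -> vv y \is a Num.int ->
  vb z \is a Num.int -> vu z \is a Num.int -> vv z \is a Num.int ->
  [/\ vb t \is a Num.int, vu t \is a Num.int & vv t \is a Num.int].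
Proof.
move=> H ibx iux ivx iby iuy ivy ibz iuz ivz.
have C := colrel H.
pose o0 := @Ordinal 4 0 isT. pose o1 := @Ordinal 4 1 isT.
pose o2 := @Ordinal 4 2 isT. pose o3 := @Ordinal 4 3 isT.
have hbb := colrel_gamma (C o1 o1).
have hbu := colrel_gamma (C o1 o2).
have hbv := colrel_gamma (C o1 o3).
have huu := colrel_gamma (C o2 o2).
have huv := colrel_gamma (C o2 o3).
have hvv := colrel_gamma (C o3 o3).
rewrite !mxE /= /compv /= in hbb hbu hbv huu huv hvv.
have hD := det_lemma hbb hbu hbv huu huv hvv.
set be := vb t - (vb x + vb y + vb z) in hbb hbu hbv hD.
set mu := vu t - (vu x + vu y + vu z) in hbu huu huv.
set nu := vv t - (vv x + vv y + vv z) in hbv huv hvv.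
have iD : det3 (vb x) (vu x) (vv x) (vb y) (vu y) (vv y) (vb z) (vu z) (vv z) \is a Num.int.
  by rewrite /det3; intt.
have ibe : be \is a Num.int.
  have : (be - det3 (vb x) (vu x) (vv x) (vb y) (vu y) (vv y) (vb z) (vu z) (vv z))
       * (be + det3 (vb x) (vu x) (vv x) (vb y) (vu y) (vv y) (vb z) (vu z) (vv z)) = 0.
    by transitivity (be ^+ 2 - (det3 (vb x) (vu x) (vv x) (vb y) (vu y) (vv y) (vb z) (vu z) (vv z)) ^+ 2);
      [ring | rewrite hD subrr].
  move/eqP; rewrite mulf_eq0 => /orP [] /eqP h.
  + have -> : be = det3 (vb x) (vu x) (vv x) (vb y) (vu y) (vv y) (vb z) (vu z) (vv z).
      by rewrite -[be]subr0 -h; ring.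
    by [].
  + have -> : be = - det3 (vb x) (vu x) (vv x) (vb y) (vu y) (vv y) (vb z) (vu z) (vv z).
      by rewrite -[be]subr0 -h; ring.
    by rewrite rpredN.
have ipbu : be * mu \is a Num.int by rewrite hbu; intt.
have ipbv : be * nu \is a Num.int by rewrite hbv; intt.
have iuu : mu * mu \is a Num.int by rewrite huu; intt.
have ivv : nu * nu \is a Num.int by rewrite hvv; intt.
have [imu inu] : mu \is a Num.int /\ nu \is a Num.int.
  have [be0|ben0] := eqVneq be 0; last by split; apply: (int_of ibe ben0).
  pose d := V4 (vbb t - vbb x - vbb y - vbb z) be mu nu.
  have hd : lf d d = lf t t + lf x x + lf y y + lf z z
     - 2 * (lf t x + lf t y + lf t z) + 2 * (lf x y + lf x z + lf y z).
    by rewrite /lf /= /be /mu /nu; ring.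
  have := H o3 o3; have := H o0 o0; have := H o1 o1; have := H o2 o2.
  have := H o3 o0; have := H o3 o1; have := H o3 o2.
  have := H o0 o1; have := H o0 o2; have := H o1 o2.
  rewrite /= => e12 e02 e01 e32 e31 e30 e22 e11 e00 e33.
  rewrite e12 e02 e01 e32 e31 e30 e22 e11 e00 e33 in hd.
  have hmn : mu * mu + nu * nu = 4.
    transitivity (lf d d); first by rewrite /lf /= be0; ring.
    by rewrite hd; ring.
  have imu4 : mu * mu / 4 \is a Num.int.
    have -> : mu * mu / 4 = 1 + (vu x * vu y + vu y * vu z + vu x * vu z).
      by rewrite huu; field.
    by intt; rewrite int_num1.
  have inu4 : nu * nu / 4 \is a Num.int.
    have -> : nu * nu / 4 = 1 + (vv x * vv y + vv y * vv z + vv x * vv z).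
      by rewrite hvv; field.
    by intt; rewrite int_num1.
  have smu := sqr_ge0 mu; have snu := sqr_ge0 nu.
  rewrite expr2 in smu snu.
  split; apply: sq_int_small => //; lra.
have -> : vb t = be + (vb x + vb y + vb z) by rewrite /be; ring.
have -> : vu t = mu + (vu x + vu y + vu z) by rewrite /mu; ring.
have -> : vv t = nu + (vv x + vv y + vv z) by rewrite /nu; ring.
by split; intt.
Qed.

Unset Implicit Arguments. Set Strict Implicit. Set Printing Implicit Defensive.

Lemma gramH (R : realType) (D : 'I_4 -> ocircle R) (p0 p1 p2 p3 : 'I_4) :
  descartes_config D -> uniq [:: p0; p1; p2; p3] ->
  forall i j : 'I_4,
    lf (nth (vec (D p0)) (map (fun p => vec (D p)) [:: p0; p1; p2; p3]) i)
       (nth (vec (D p0)) (map (fun p => vec (D p)) [:: p0; p1; p2; p3]) j)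
    = if i == j then 1 else -1.
Proof.
move=> hD hu i j.
rewrite !(nth_map p0) ?size_map //.
have [->|ij] := eqVneq i j.
  by apply: lf_vec_self; case: hD => wf _; apply: wf.
apply: (gram hD).
by rewrite nth_uniq.
Qed.

Lemma rowP' (R : realType) (D : 'I_4 -> ocircle R) (i : 'I_4) :
  (forall j : 'I_3, cc_matrix D i j \is a Num.int) <->
  [/\ curvature (D i) \is a Num.int,
      (curv_center (D i)).1 \is a Num.int &
      (curv_center (D i)).2 \is a Num.int].
Proof.
split.
- move=> h; have h0 := h (@Ordinal 3 0 isT); have h1 := h (@Ordinal 3 1 isT);
    have h2 := h (@Ordinal 3 2 isT).
  by rewrite !mxE /= in h0 h1 h2.
- by move=> [a b c] j; rewrite mxE; case: j => [[|[|[|?]]] //= _].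
Qed.

Lemma main4 (R : realType) (D : 'I_4 -> ocircle R) :
  descartes_config D ->
  (exists k : 'I_4, forall i : 'I_4, i != k ->
     forall j : 'I_3, cc_matrix D i j \is a Num.int) ->
  forall (i : 'I_4) (j : 'I_3), cc_matrix D i j \is a Num.int.
Proof.
move=> hD [k hk] i.
have [->|ik] := eqVneq i k; last exact: hk.
apply/rowP'.
have F : forall p0 p1 p2 : 'I_4, uniq [:: p0; p1; p2; k] ->
    p0 != k -> p1 != k -> p2 != k ->
    [/\ curvature (D k) \is a Num.int,
      (curv_center (D k)).1 \is a Num.int &
      (curv_center (D k)).2 \is a Num.int].
  move=> p0 p1 p2 hu h0 h1 h2.
  have [a0 b0 c0] := (rowP' _ D p0).1 (hk _ h0).
  have [a1 b1 c1] := (rowP' _ D p1).1 (hk _ h1).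
  have [a2 b2 c2] := (rowP' _ D p2).1 (hk _ h2).
  exact: (fourth (gramH _ _ _ _ _ _ hD hu) a0 b0 c0 a1 b1 c1 a2 b2 c2).
case: k hk F => [[|[|[|[|?]]]] // Hk] hk F.
- by apply: (F (@Ordinal 4 1 isT) (@Ordinal 4 2 isT) (@Ordinal 4 3 isT)).
- by apply: (F (@Ordinal 4 0 isT) (@Ordinal 4 2 isT) (@Ordinal 4 3 isT)).
- by apply: (F (@Ordinal 4 0 isT) (@Ordinal 4 1 isT) (@Ordinal 4 3 isT)).
- by apply: (F (@Ordinal 4 0 isT) (@Ordinal 4 1 isT) (@Ordinal 4 2 isT)).
Qed.

Theorem theorem9p1 (R : realType) (D : 'I_4 -> ocircle R) :
  descartes_config D ->
  ((forall (i : 'I_4) (j : 'I_3), cc_matrix D i j \is a Num.int) <->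
   exists k : 'I_4, forall i : 'I_4, i != k ->
     forall j : 'I_3, cc_matrix D i j \is a Num.int) /\
  ((forall (i : 'I_4) (j : 'I_3), cc_matrix D i j \is a Num.int) <->
   exists k : 'I_4, forall i : 'I_4, i != k ->
     [/\ curvature (D i) \is a Num.int,
         (curv_center (D i)).1 \is a Num.int &
         (curv_center (D i)).2 \is a Num.int]).
Proof.
move=> hD; split; split.
- by move=> h; exists ord0 => i _; apply: h.
- exact: main4 _ _ hD.
- by move=> h; exists ord0 => i _; apply/(rowP' _ D); apply: h.
- move=> [k hk]; apply: (main4 _ _ hD); exists k => i ik; apply/(rowP' _ D); exact: hk.
Qed.
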